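(* Let $X$ be a random variable taking values in a set $\mathcal{X}$ and $Y \in [0,1]$ a target outcome. Let $\mathcal{F}$ be a class of functions $\mathcal{X} \to \mathbb{R}$ that is closed under affine transformations, i.e. $f \in \mathcal{F}$ implies $a + bf \in \mathcal{F}$ for all $a, b \in \mathbb{R}$, and let $\tilde{\mathcal{F}} = \{f \in \mathcal{F} : \mathcal{R}(f) \subseteq [0,1]\}$. Let $h : \mathcal{X} \to [0,1]$ have countable range $\mathcal{R}(h)$ (with $\mathbb{P}(h(X) = v) > 0$ for each $v \in \mathcal{R}(h)$). If for all $f \in \mathcal{F}$ and $v \in \mathcal{R}(h)$, $$\mathbb{E}\left[(h(X) - Y)^2 - (f(X) - Y)^2 \mid h(X) = v\right] < \alpha^2,$$ then the level sets $\{x \in \mathcal{X} : h(x) = v\}$, $v \in \mathcal{R}(h)$, form a $(2\alpha)$-multicalibrated partition with respect to $\tilde{\mathcal{F}}$ and $Y$.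
   Context: $\mathcal{R}(f)$ denotes the range of a function $f$. A set $S \subseteq \mathcal{X}$ is $\alpha'$-indistinguishable with respect to a function class $\mathcal{G}$ and $Y$ if $|\mathrm{Cov}(g(X), Y \mid X \in S)| \le \alpha'$ for all $g \in \mathcal{G}$. Sets form an $\alpha'$-multicalibrated partition with respect to $\mathcal{G}$ and $Y$ if they partition $\mathcal{X}$ and each is $\alpha'$-indistinguishable with respect to $\mathcal{G}$ and $Y$. *)

(* Defs.v *)
From HB Require Import structures.
From mathcomp Require Import all_boot all_order all_algebra.
From mathcomp Require Import all_classical all_reals all_analysis.
Set Implicit Arguments. Unset Strict Implicit. Unset Printing Implicit Defensive.
Import Order.TTheory GRing.Theory Num.Theory.
Local Open Scope classical_set_scope.
Local Open Scope ring_scope.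
Local Open Scope ereal_scope.

Section Defs.
Context (d : measure_display) (T : measurableType d) (R : realType).

Definition condE (P : probability T R) (A : set T) (Z : T -> \bar R) : \bar R :=
  (\int[P]_(t in A) Z t) * ((fine (P A))^-1)%:E.

Definition condCov (P : probability T R) (A : set T) (U V : T -> R) : \bar R :=
  let mU := fine (condE P A (fun t => (U t)%:E)) in
  let mV := fine (condE P A (fun t => (V t)%:E)) in
  condE P A (fun t => ((U t - mU) * (V t - mV))%:E).

Context (d' : measure_display) (Xs : measurableType d').

Definition indistinguishable (P : probability T R) (X : T -> Xs) (Y : T -> R)
  (G : set (Xs -> R)) (alpha' : R) (S : set Xs) : Prop :=
  forall g, G g -> `| condCov P (X @^-1` S) (fun t => g (X t)) Y | <= alpha'%:E.

Definition multicalibrated_partition (P : probability T R) (X : T -> Xs)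
  (Y : T -> R) (G : set (Xs -> R)) (alpha' : R)
  (I : Type) (D : set I) (S : I -> set Xs) : Prop :=
  [/\ \bigcup_(i in D) S i = setT, trivIset D S &
      forall i, D i -> indistinguishable P X Y G alpha' (S i)].

End Defs.

(* Main.v *)
Require Import Defs.
From HB Require Import structures.
From mathcomp Require Import all_boot all_order all_algebra.
From mathcomp Require Import all_classical all_reals all_analysis.
From mathcomp Require Import ring lra.
Import Order.TTheory GRing.Theory Num.Theory.
Local Open Scope classical_set_scope.
Local Open Scope ring_scope.

Section Helpers.
Context {d : measure_display} {T : measurableType d} {R : realType}.

Definition good (Z : T -> R) :=
  measurable_fun setT Z /\ exists M : R, forall t, `|Z t| <= M.

Lemma goodC (c : R) : good (fun _ => c).
Proof. split; first exact: measurable_cst. by exists `|c|. Qed.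

Lemma goodD (f g : T -> R) : good f -> good g -> good (fun t => f t + g t).
Proof.
move=> [mf [M1 H1]] [mg [M2 H2]]; split; first exact: measurable_realfun.measurable_funD.
exists (M1 + M2) => t; apply: le_trans (ler_normD _ _) _; exact: lerD.
Qed.

Lemma goodB (f g : T -> R) : good f -> good g -> good (fun t => f t - g t).
Proof.
move=> [mf [M1 H1]] [mg [M2 H2]]; split; first exact: measurable_realfun.measurable_funB.
exists (M1 + M2) => t; apply: le_trans (ler_normB _ _) _; exact: lerD.
Qed.

Lemma goodM (f g : T -> R) : good f -> good g -> good (fun t => f t * g t).
Proof.
move=> [mf [M1 H1]] [mg [M2 H2]]; split; first exact: measurable_realfun.measurable_funM.
exists (M1 * M2) => t; rewrite normrM; apply: ler_pM => //.
Qed.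

Lemma good_integrable (P : probability T R) (A : set T) (Z : T -> R) :
  measurable A -> good Z -> P.-integrable A (EFin \o Z).
Proof.
move=> mA [mZ [M HM]]; apply: measurable_bounded_integrable => //.
- by apply: (le_lt_trans (probability_le1 P mA)); rewrite ltry.
- exact: measurable_funS mZ.
- exists M; split; first exact: num_real.
  move=> y /ltW My x Ax; exact: le_trans (HM x) My.
Qed.

Lemma condE_R (P : probability T R) (A : set T) (Z : T -> R) :
  measurable A -> good Z ->
  condE P A (fun t => (Z t)%:E) = ((\int[P]_(x in A) Z x) / fine (P A))%:E.
Proof.
move=> mA gZ; rewrite /condE.
have gi : P.-integrable A (EFin \o Z) by apply: good_integrable.
have fin := integrable_fin_num mA gi.
by rewrite -[X in (X * _)%E](fineK fin) -EFinM.
Qed.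

Lemma condE_eq (P : probability T R) (A : set T) (Z1 Z2 : T -> \bar R) :
  measurable A -> (forall t, A t -> Z1 t = Z2 t) ->
  condE P A Z1 = condE P A Z2.
Proof.
move=> mA H; rewrite /condE; congr (_ * _)%E.
by apply: eq_integral => t /[!inE] /H.
Qed.

End Helpers.

Ltac solve_good := repeat first [assumption | apply: goodM | apply: goodB | apply: goodD | apply: goodC].

Theorem lemma5 (d : measure_display) (T : measurableType d) (R : realType)
  (P : probability T R) (d' : measure_display) (Xs : measurableType d')
  (X : T -> Xs) (Y : T -> R) (F : set (Xs -> R)) (h : Xs -> R) (alpha : R) :
  measurable_fun setT X ->
  measurable_fun setT Y ->
  (forall t, 0 <= Y t <= 1) ->
  (forall f, F f -> measurable_fun setT f) ->
  (forall f, F f -> forall a b : R, F (fun x => a + b * f x)) ->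
  measurable_fun setT h ->
  range h `<=` `[0, 1] ->
  countable (range h) ->
  (forall v, range h v -> (0 < P (X @^-1` (h @^-1` [set v])))%E) ->
  0 <= alpha ->
  (forall f, F f -> forall v, range h v ->
     (condE P (X @^-1` (h @^-1` [set v]))
        (fun t => ((h (X t) - Y t) ^+ 2 - (f (X t) - Y t) ^+ 2)%:E)
      < (alpha ^+ 2)%:E)%E) ->
  multicalibrated_partition P X Y
    [set f | F f /\ range f `<=` `[0, 1]] (2 * alpha)
    (range h) (fun v => h @^-1` [set v]).
Proof.
move=> mX mY Y01 mF Faff mh _ _ PA0 a0 Hyp.
split.
- by apply/seteqP; split=> x //= _; exists (h x) => //; exists x.
- by move=> i j _ _ [x [/= <- <-]].
move=> v hv g [Fg rg].
set A := X @^-1` (h @^-1` [set v]).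
have mA : measurable A.
  by rewrite -[A]setTI; apply: mX => //; rewrite -[_ @^-1` _]setTI; apply: mh.
have PA := PA0 v hv; rewrite -/A in PA.
have finA : P A \is a fin_num.
  rewrite ge0_fin_numE; last exact: ltW.
  exact: le_lt_trans (probability_le1 P mA) (ltry 1).
set p := fine (P A).
have p0 : 0 < p by rewrite -lte_fin /p fineK.
have p1 : p <= 1 by rewrite -lee_fin /p fineK // probability_le1.
set u := fun t => g (X t).
have u01 : forall t, 0 <= u t <= 1.
  move=> t; have := rg (u t) (imageT _ _); by rewrite /= in_itv.
have gu : good u.
  split; first exact: measurableT_comp (mF _ Fg) mX.
  exists 1 => t; have /andP[? ?] := u01 t; by rewrite ger0_norm.
have gY : good Y.
  split=> //; exists 1 => t; have /andP[? ?] := Y01 t; by rewrite ger0_norm.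
set RI := fun Z => \int[P]_(x in A) Z x.
have iI : forall Z, good Z -> P.-integrable A (EFin \o Z).
  by move=> Z; apply: good_integrable.
set m := RI u / p.
set mYY := RI Y / p.
have cm : fine (condE P A (fun t => (u t)%:E)) = m by rewrite condE_R.
have cmY : fine (condE P A (fun t => (Y t)%:E)) = mYY by rewrite condE_R.
set c := RI (fun t => (u t - m) * (Y t - mYY)) / p.
have cov : condCov P A (fun t => g (X t)) Y = c%:E.
  rewrite /condCov -/u cm cmY condE_R //.
  by apply: goodM; apply: goodB => //; apply: goodC.
have Hc := Hyp _ (Faff _ Fg (v - c * m) c) v hv.
rewrite -/A in Hc.
have gs : forall Z, good Z -> P.-integrable A (EFin \o Z) := iI.
set a := RI (fun t => (u t - m) * (Y t - mYY)).
set b := RI (fun t => u t - m).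
set V := RI (fun t => (u t - m) * (u t - m)).
have gum : good (fun t => u t - m) by apply: goodB => //; apply: goodC.
have gYm : good (fun t => Y t - mYY) by apply: goodB => //; apply: goodC.
have gW : good (fun t => 2 * c * ((u t - m) * (Y t - mYY))
     + 2 * c * (mYY - v) * (u t - m) - c ^+ 2 * ((u t - m) * (u t - m))).
  apply: goodB; first apply: goodD.
  - by apply: goodM; [apply: goodC | apply: goodM].
  - by apply: goodM; [apply: goodC | ].
  - by apply: goodM; [apply: goodC | apply: goodM].
move: Hc; rewrite (@condE_eq _ _ _ P A _ (fun t => (2 * c * ((u t - m) * (Y t - mYY))
     + 2 * c * (mYY - v) * (u t - m) - c ^+ 2 * ((u t - m) * (u t - m)))%:E) mA); last first.
  move=> t At; have hv' : h (X t) = v := At.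
  by congr EFin; rewrite hv' /u; ring.
rewrite (condE_R P A _ mA gW) lte_fin.
have -> : \int[P]_(t in A) (2 * c * ((u t - m) * (Y t - mYY))
     + 2 * c * (mYY - v) * (u t - m) - c ^+ 2 * ((u t - m) * (u t - m)))
   = 2 * c * a + 2 * c * (mYY - v) * b - c ^+ 2 * V.
  have g1 : good (fun t => (u t - m) * (Y t - mYY)) by solve_good.
  have g2 : good (fun t => (u t - m) * (u t - m)) by solve_good.
  have g1' : good (fun t => 2 * c * ((u t - m) * (Y t - mYY))) by solve_good.
  have g3' : good (fun t => 2 * c * (mYY - v) * (u t - m)) by solve_good.
  have g2' : good (fun t => c ^+ 2 * ((u t - m) * (u t - m))) by solve_good.
  have g12 : good (fun t => 2 * c * ((u t - m) * (Y t - mYY))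
     + 2 * c * (mYY - v) * (u t - m)) by solve_good.
  rewrite (RintegralB mA (gs _ g12) (gs _ g2')).
  rewrite (RintegralD mA (gs _ g1') (gs _ g3')).
  rewrite (RintegralZl _ mA (gs _ g1)) (RintegralZl _ mA (gs _ gum)).
  by rewrite (RintegralZl _ mA (gs _ g2)).
have b0 : b = 0.
  rewrite /b /RI (RintegralB mA (gs _ gu) (gs _ (goodC m))).
  rewrite Rintegral_cst // -/p /m -/(RI u) mulfVK //; last by rewrite gt_eqF.
  by rewrite subrr.
have RI1 : RI (fun _ => 1) = p by rewrite /RI Rintegral_cst // mul1r.
have Iu0 : 0 <= RI u by apply: Rintegral_ge0 => t _; have /andP[] := u01 t.
have Iu1 : RI u <= p.
  rewrite -RI1; apply: le_Rintegral => //; try by apply: gs; solve_good.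
  by move=> t _; have /andP[] := u01 t.
have m0 : 0 <= m by apply: divr_ge0 => //; exact: ltW.
have m1 : m <= 1 by rewrite /m ler_pdivrMr // mul1r.
have Vp : V <= p.
  rewrite -RI1; apply: le_Rintegral => //; try by apply: gs; solve_good.
  move=> t _; have /andP[u0 u1] := u01 t; nra.
have ac : a = c * p by rewrite /c mulfVK // gt_eqF.
rewrite b0 ac => Hlt.
have H2 : 2 * c * (c * p) + 2 * c * (mYY - v) * 0 - c ^+ 2 * V < alpha ^+ 2 * p.
  by rewrite -ltr_pdivrMr.
have H3 : c ^+ 2 * V <= c ^+ 2 * p by apply: ler_wpM2l => //; exact: sqr_ge0.
have H4 : c ^+ 2 < alpha ^+ 2.
  rewrite -(ltr_pM2r p0); rewrite !expr2 in H2 H3 *; nra.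
rewrite cov lee_fin.
rewrite !expr2 in H4; case: (lerP 0 c) => c0.
  rewrite ger0_norm //; nra.
rewrite ltr0_norm //; nra.
Qed.
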